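(* Let $M$ and $M'$ be two certification menus (of threshold certificates with transfers) with $M\subseteq M'$. Then $\operatorname{Wel}(M')-\operatorname{Rev}(M')\ge\operatorname{Wel}(M)-\operatorname{Rev}(M)$; that is, the total utility of consumers and producers under $M'$ is at least that under $M$, regardless of the transfers attached to the additional certificates.
   Context: Certification market: producers with types $\psi$ (atomless distribution $G$, compact support), consumers with types $\phi$ (atomless distribution $F$, compact support), quality $q\in[0,1]$; cost $g(q;\psi)$ weakly convex non-decreasing in $q$, $g(0;\psi)=0$; value $f(q;\phi)$ weakly concave non-decreasing in $q$, $f(0;\phi)=0$, $0\le f\le1$; strict single-crossing: for $\phi_1<\phi_2$, $q_1<q_2$: $f(q_2;\phi_2)-f(q_1;\phi_2)>f(q_2;\phi_1)-f(q_1;\phi_1)$, and for $\psi_1<\psi_2$, $q_1<q_2$: $g(q_2;\psi_2)-g(q_1;\psi_2)<g(q_2;\psi_1)-g(q_1;\psi_1)$. A menu is a set $\{(q_i,t_i)\}$ of threshold certificates $[q_i,1]$ with transfers $t_i$, always including $(0,0)$; the certifier incurs verification cost $c\ge0$ per non-trivial certificate; a producer choosing threshold $q_i$ produces at quality $q_i$. Producers choose certificates in equilibrium and then trade in a competitive (Walrasian) market equilibrium; in equilibrium producer $\psi$ trades with consumer $\phi(\psi)$, $F(\phi(\psi))=G(\psi)$, and picks the menu item maximizing $f(q_i;\phi(\psi))-g(q_i;\psi)-t_i$. $\operatorname{Rev}(M)$ is the certifier's equilibrium revenue (transfers minus verification costs) and $\operatorname{Wel}(M)$ is the equilibrium total utility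 of consumers, producers and certifier. *)

(* Defs.v *)
From HB Require Import structures.
From mathcomp Require Import all_boot all_order all_algebra.
From mathcomp Require Import all_classical all_reals all_analysis.
Set Implicit Arguments. Unset Strict Implicit. Unset Printing Implicit Defensive.
Import Order.TTheory GRing.Theory Num.Theory.
Local Open Scope classical_set_scope.
Local Open Scope ring_scope.

Definition distfun (R : realType) (P : probability R R) (x : R) : R :=
  fine (P [set` `]-oo, x]]).

Definition atomless_compact (R : realType) (P : probability R R) : Prop :=
  (forall x : R, P [set x] = 0%E) /\
  exists a b : R, P [set` `[a, b]] = 1%E.

(* g(q;psi): cost of producing quality q for producer type psi.
   Written as g q psi. Weakly convex and non-decreasing in q on [0,1],
   g(0;psi) = 0, strictly single-crossing. *)
Definition cost_assumptions (R : realType) (g : R -> R -> R) : Prop :=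
  [/\ forall psi, g 0 psi = 0,
      forall psi q1 q2, 0 <= q1 -> q1 <= q2 -> q2 <= 1 -> g q1 psi <= g q2 psi,
      forall psi x y l, 0 <= x <= 1 -> 0 <= y <= 1 -> 0 <= l <= 1 ->
        g (l * x + (1 - l) * y) psi <= l * g x psi + (1 - l) * g y psi &
      forall psi1 psi2 q1 q2, psi1 < psi2 -> 0 <= q1 -> q1 < q2 -> q2 <= 1 ->
        g q2 psi2 - g q1 psi2 < g q2 psi1 - g q1 psi1].

(* f(q;phi): value of quality q to consumer type phi, written f q phi.
   Weakly concave and non-decreasing in q on [0,1], f(0;phi)=0,
   0 <= f <= 1, strictly single-crossing. *)
Definition value_assumptions (R : realType) (f : R -> R -> R) : Prop :=
  [/\ forall phi, f 0 phi = 0,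
      forall phi q, 0 <= q <= 1 -> 0 <= f q phi <= 1,
      forall phi q1 q2, 0 <= q1 -> q1 <= q2 -> q2 <= 1 -> f q1 phi <= f q2 phi,
      forall phi x y l, 0 <= x <= 1 -> 0 <= y <= 1 -> 0 <= l <= 1 ->
        l * f x phi + (1 - l) * f y phi <= f (l * x + (1 - l) * y) phi &
      forall phi1 phi2 q1 q2, phi1 < phi2 -> 0 <= q1 -> q1 < q2 -> q2 <= 1 ->
        f q2 phi2 - f q1 phi2 > f q2 phi1 - f q1 phi1].

(* A menu: a set of threshold certificates (q, t) (certificate [q,1] with
   transfer t), with q in [0,1], always containing the trivial item (0,0). *)
Definition menu (R : realType) (M : set (R * R)) : Prop :=
  M (0, 0) /\ forall m, M m -> 0 <= m.1 <= 1.

Definition pair_surplus (R : realType) (f g : R -> R -> R) (phi psi : R)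
  (m : R * R) : R := f m.1 phi - g m.1 psi - m.2.

(* Equilibrium certificate choice: s psi is the menu item chosen by producer
   psi, who trades with consumer phi(psi); s psi maximizes
   f(q_i;phi(psi)) - g(q_i;psi) - t_i over the menu (for G-a.e. psi). *)
Definition equilibrium_choice (R : realType) (G : probability R R)
  (f g : R -> R -> R) (phi : R -> R) (M : set (R * R)) (s : R -> R * R) : Prop :=
  {ae G, forall psi, M (s psi) /\
     forall m, M m -> pair_surplus f g (phi psi) psi m
                      <= pair_surplus f g (phi psi) psi (s psi)}.

Definition verif_cost (R : realType) (c : R) (m : R * R) : R :=
  if 0 < m.1 then c else 0.

Definition certifier_util (R : realType) (c : R) (m : R * R) : R :=
  m.2 - verif_cost c m.

Definition total_util (R : realType) (f g : R -> R -> R) (c : R)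
  (phi psi : R) (m : R * R) : R :=
  pair_surplus f g phi psi m + certifier_util c m.

(* Rev(M): certifier's equilibrium revenue (transfers minus verification
   costs), given equilibrium choice s. *)
Definition Rev (R : realType) (G : probability R R) (c : R) (s : R -> R * R) : R :=
  Rintegral G setT (fun psi => certifier_util c (s psi)).

Definition Wel (R : realType) (G : probability R R) (f g : R -> R -> R)
  (c : R) (phi : R -> R) (s : R -> R * R) : R :=
  Rintegral G setT (fun psi => total_util f g c (phi psi) psi (s psi)).

(* Main.v *)
Require Import Defs.
From HB Require Import structures.
From mathcomp Require Import all_boot all_order all_algebra.
From mathcomp Require Import all_classical all_reals all_analysis.
Import Order.TTheory GRing.Theory Num.Theory.
Local Open Scope classical_set_scope.
Local Open Scope ring_scope.
Theorem proposition4 (R : realType)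
  (G F : probability R R) (f g : R -> R -> R) (phi : R -> R) (c : R)
  (M M' : set (R * R)) (s s' : R -> R * R) :
  atomless_compact G -> atomless_compact F ->
  value_assumptions f -> cost_assumptions g ->
  0 <= c ->
  (forall psi, distfun F (phi psi) = distfun G psi) ->
  menu M -> menu M' -> M `<=` M' ->
  equilibrium_choice G f g phi M s ->
  equilibrium_choice G f g phi M' s' ->
  G.-integrable setT (fun psi => (certifier_util c (s psi))%:E) ->
  G.-integrable setT (fun psi => (total_util f g c (phi psi) psi (s psi))%:E) ->
  G.-integrable setT (fun psi => (certifier_util c (s' psi))%:E) ->
  G.-integrable setT (fun psi => (total_util f g c (phi psi) psi (s' psi))%:E) ->
  Wel G f g c phi s' - Rev G c s' >= Wel G f g c phi s - Rev G c s.
Proof.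
move=> _ _ _ _ _ _ _ _ MM' eqs eqs' ic it ic' it'.
rewrite /Wel /Rev -!RintegralB //.
set u := fun psi => total_util f g c (phi psi) psi (s psi) - certifier_util c (s psi).
set u' := fun psi => total_util f g c (phi psi) psi (s' psi) - certifier_util c (s' psi).
have iu : G.-integrable setT (EFin \o u).
  have := integrableB measurableT it ic; apply: eq_integrable => // x _ /=; by rewrite EFinB.
have iu' : G.-integrable setT (EFin \o u').
  have := integrableB measurableT it' ic'; apply: eq_integrable => // x _ /=; by rewrite EFinB.
rewrite -subr_ge0 -RintegralB //.
set h := fun psi => u' psi - u psi.
have ih : G.-integrable setT (EFin \o h).
  have := integrableB measurableT iu' iu; apply: eq_integrable => // x _ /=; by rewrite EFinB.
have mh := measurable_int _ ih.
have ae : {ae G, forall x, setT x -> (EFin \o h) x = ((EFin \o h)^\+)%E x}.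
  have := @filterI _ _ (ae_filter_ringOfSetsType G) _ _ eqs eqs'.
  apply: (@filterS _ _ (ae_filter_ringOfSetsType G)) => x [[Mx _] [_ Hx]] _.
  have : 0 <= h x.
    rewrite /h /u /u' /total_util subr_ge0 !addrK.
    exact: Hx (MM' _ Mx).
  by move=> h0 /=; rewrite funeposE /= max_l // lee_fin.
rewrite /Rintegral (ae_eq_integral ((EFin \o h)^\+)%E) //.
  by apply: fine_ge0; apply: integral_ge0 => x _; exact: funepos_ge0.
exact: measurable_realfun.measurable_funepos.
Qed.
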